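(* Let $M$ be a finite-dimensional quantum system with $\dim\mathcal H_M\ge 2$, let $P$ be a qubit with basis $\{|0\rangle,|1\rangle\}$, and let $|\psi_0\rangle\in\mathcal H_M$ be a unit vector. Let $\mathcal E_0(\cdot)=|\psi_0\rangle\langle\psi_0|\operatorname{Tr}[\cdot]$ be the pure erasure channel on $M$ and $\mathcal C=\mathcal E_0\otimes\mathcal I_P$, where $\mathcal I_P$ is the identity channel on $P$. Let $A$ and $B$ be copies of $M$, $\widetilde A=A\oplus\mathrm{Vac}$, $\widetilde B=B\oplus\mathrm{Vac}$, where $\mathrm{Vac}$ is a one-dimensional sector spanned by $|\mathrm{vac}\rangle$, and let $U:\mathcal H_M\otimes\mathcal H_P\to(\mathcal H_A\otimes\mathcal H_{\mathrm{Vac}})\oplus(\mathcal H_{\mathrm{Vac}}\otimes\mathcal H_B)\subseteq\mathcal H_{\widetilde A}\otimes\mathcal H_{\widetilde B}$ be the unitary defined by $U(|\psi\rangle\otimes|0\rangle)=|\psi\rangle\otimes|\mathrm{vac}\rangle$ and $U(|\psi\rangle\otimes|1\rangle)=|\mathrm{vac}\rangle\otimes|\psi\rangle$, with $\mathcal U(\cdot)=U\cdot U^\dagger$. Then there do not exist finite-dimensional systems $E$ and $F$, a state $\sigma_{EF}$ of $EF$, and unitaries $\widetilde V_{AE}=V_{AE}\oplus(|\mathrm{vac}\rangle\langle\mathrm{vac}|\otimes I_E)$ on $\mathcal H_{\widetilde A}\otimes\mathcal H_E$ and $\widetilde W_{BF}=W_{BF}\oplus(|\mathrm{vac}\rangle\langle\mathrm{vac}|\otimes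 I_F)$ on $\mathcal H_{\widetilde B}\otimes\mathcal H_F$ (with $V_{AE}$ unitary on $\mathcal H_A\otimes\mathcal H_E$ and $W_{BF}$ unitary on $\mathcal H_B\otimes\mathcal H_F$), such that for all states $\rho$ of $M$ and $\omega$ of $P$ $$\mathcal C(\rho\otimes\omega)=\mathcal U^\dagger\Big(\operatorname{Tr}_{EF}\big\{(\widetilde{\mathcal V}_{AE}\otimes\widetilde{\mathcal W}_{BF})[\mathcal U(\rho\otimes\omega)\otimes\sigma_{EF}]\big\}\Big),$$ where $\widetilde{\mathcal V}_{AE}(\cdot)=\widetilde V_{AE}\cdot\widetilde V_{AE}^\dagger$, $\widetilde{\mathcal W}_{BF}(\cdot)=\widetilde W_{BF}\cdot\widetilde W_{BF}^\dagger$ and $\mathcal U^\dagger(\cdot)=U^\dagger\cdot U$.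
   Context: $\widetilde{\mathcal V}_{AE}$ and $\widetilde{\mathcal W}_{BF}$ model the interaction of a particle with local environments $E$ and $F$ on two spatially separated paths; they act as the identity when the particle's input on that path is the vacuum. The tensor product $\widetilde{\mathcal V}_{AE}\otimes\widetilde{\mathcal W}_{BF}$ acts on $\widetilde A\otimes\widetilde B\otimes E\otimes F$ with subsystems reordered as appropriate. *)

(* Defs.v *)
(* An operator from the
   space with basis T to the space with basis S is a function S -> T -> C
   (its matrix entries), over an arbitrary numClosedFieldType C (e.g. the
   complex numbers), with conjugation x^*. *)
From HB Require Import structures.
From mathcomp Require Import all_boot all_order all_algebra.
Set Implicit Arguments. Unset Strict Implicit. Unset Printing Implicit Defensive.
Import Order.TTheory GRing.Theory Num.Theory.
Local Open Scope ring_scope.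

Section Ops.
Variable C : numClosedFieldType.

Definition op (S T : finType) := S -> T -> C.

Definition idop (S : finType) : op S S := fun i j => (i == j)%:R.

Definition mulop (S T U : finType) (A : op S T) (B : op T U) : op S U :=
  fun i k => \sum_(j : T) A i j * B j k.

Definition adjop (S T : finType) (A : op S T) : op T S :=
  fun i j => (A j i)^*.

Definition trop (S : finType) (A : op S S) : C := \sum_(i : S) A i i.

Definition tensop (S1 T1 S2 T2 : finType) (A : op S1 T1) (B : op S2 T2)
  : op (S1 * S2)%type (T1 * T2)%type :=
  fun i j => A i.1 j.1 * B i.2 j.2.

Definition ptrace2 (S T : finType) (X : op (S * T)%type (S * T)%type) : op S S :=
  fun i j => \sum_(k : T) X (i, k) (j, k).

Definition conjop (S T : finType) (A : op S T) (X : op T T) : op S S :=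
  mulop (mulop A X) (adjop A).

Definition unitary (S : finType) (A : op S S) : Prop :=
  mulop (adjop A) A = @idop S /\ mulop A (adjop A) = @idop S.

Definition psd (S : finType) (A : op S S) : Prop :=
  adjop A = A /\
  forall v : S -> C, 0 <= \sum_(i : S) \sum_(j : S) (v i)^* * A i j * v j.

Definition state (S : finType) (A : op S S) : Prop := psd A /\ trop A = 1.

(* M = 'I_m, P = bool (false = |0>, true = |1>),
   A~ = B~ = option 'I_m  with  None = |vac>. *)

Definition chanC (m : nat) (psi0 : 'I_m -> C)
  (X : op ('I_m * bool)%type ('I_m * bool)%type) : op ('I_m * bool)%type ('I_m * bool)%type :=
  fun i j => psi0 i.1 * (psi0 j.1)^* * \sum_(k : 'I_m) X (k, i.2) (k, j.2).

Definition Uvac (m : nat) : op (option 'I_m * option 'I_m)%type ('I_m * bool)%type :=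
  fun x j =>
    if j.2 then ((x.1 == None) && (x.2 == Some j.1))%:R
    else ((x.1 == Some j.1) && (x.2 == None))%:R.

Definition vacext (m : nat) (E : finType) (V : op ('I_m * E)%type ('I_m * E)%type)
  : op (option 'I_m * E)%type (option 'I_m * E)%type :=
  fun x y =>
    match x.1, y.1 with
    | Some a, Some b => V (a, x.2) (b, y.2)
    | None, None => (x.2 == y.2)%:R
    | _, _ => 0
    end.

(* V~_{AE} (x) W~_{BF} acting on (A~ B~)(E F), subsystems reordered *)
Definition locop (A B E F : finType)
  (Vt : op (A * E)%type (A * E)%type) (Wt : op (B * F)%type (B * F)%type)
  : op ((A * B) * (E * F))%type ((A * B) * (E * F))%type :=
  fun x y => Vt (x.1.1, x.2.1) (y.1.1, y.2.1) * Wt (x.1.2, x.2.2) (y.1.2, y.2.2).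

End Ops.

(* Main.v *)
Require Import Defs.
From HB Require Import structures.
From mathcomp Require Import all_boot all_order all_algebra ring.
From Stdlib Require Import FunctionalExtensionality.
Set Implicit Arguments. Unset Strict Implicit. Unset Printing Implicit Defensive.
Import Order.TTheory GRing.Theory Num.Theory.
Local Open Scope ring_scope.

Section Sums.
Variable C : numClosedFieldType.

Lemma sum_option (T : finType) (F : option T -> C) :
  \sum_(x : option T) F x = F None + \sum_(t : T) F (Some t).
Proof.
rewrite (bigD1 None) //=; congr (_ + _).
rewrite (reindex_omap Some (fun x => x)) //=; last by case.
by apply: eq_bigl => t; rewrite eqxx.
Qed.

Lemma sum_pair (A B : finType) (F : A * B -> C) :
  \sum_(x : A * B) F x = \sum_(a : A) \sum_(b : B) F (a, b).
Proof. by rewrite pair_bigA; apply: eq_bigr => -[]. Qed.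

Lemma sum_delta (T : finType) (a : T) (F : T -> C) :
  \sum_x (x == a)%:R * F x = F a.
Proof.
rewrite (bigD1 a) //= eqxx mul1r big1 ?addr0 // => x /negbTE ->.
by rewrite mul0r.
Qed.

Lemma sum_deltar (T : finType) (a : T) (F : T -> C) :
  \sum_x F x * (x == a)%:R = F a.
Proof. by rewrite -[RHS](sum_delta a); apply: eq_bigr => x _; rewrite mulrC. Qed.

Lemma sum_delta' (T : finType) (a : T) (F : T -> C) :
  \sum_x (a == x)%:R * F x = F a.
Proof. by rewrite -[RHS](sum_delta a); apply: eq_bigr => x _; rewrite eq_sym. Qed.

Lemma sum_deltar' (T : finType) (a : T) (F : T -> C) :
  \sum_x F x * (a == x)%:R = F a.
Proof. by rewrite -[RHS](sum_delta a); apply: eq_bigr => x _; rewrite mulrC eq_sym. Qed.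

Definition qf (T : finType) (s : op C T T) (x y : T -> C) : C :=
  \sum_c \sum_c' x c * s c c' * (y c')^*.

End Sums.


Section Eval.
Variable C : numClosedFieldType.
Variable m : nat.

Definition uidx (j : 'I_m * bool) : option 'I_m * option 'I_m :=
  if j.2 then (None, Some j.1) else (Some j.1, None).

Lemma Uvac_eq x j : @Uvac C m x j = (x == uidx j)%:R.
Proof. by case: j => a [] ; case: x => x1 x2; rewrite /Uvac /uidx /= xpair_eqE. Qed.

Lemma uidx_eq i j : (uidx i == uidx j) = (i == j).
Proof.
case: i j => [a [|]] [b [|]]; rewrite /uidx /= !xpair_eqE /= ?andbT ?andbF //.
Qed.

Lemma sandwich (Y : op C _ _) i j :
  mulop (mulop (adjop (@Uvac C m)) Y) (@Uvac C m) i j = Y (uidx i) (uidx j).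
Proof.
rewrite /mulop /adjop.
under eq_bigr => y _ do under eq_bigr => x _ do rewrite Uvac_eq conjC_nat.
under eq_bigr => y _ do rewrite sum_delta Uvac_eq.
by rewrite sum_deltar.
Qed.

Lemma TU_eval (X : op C ('I_m * bool)%type ('I_m * bool)%type) i j :
  conjop (@Uvac C m) X (uidx i) (uidx j) = X i j.
Proof.
rewrite /conjop /mulop /adjop.
under eq_bigr => y _ do under eq_bigr => x _ do rewrite Uvac_eq uidx_eq.
under eq_bigr => y _ do rewrite sum_delta' Uvac_eq uidx_eq conjC_nat.
by rewrite sum_deltar'.
Qed.

Variables (E F : finType).
Variables (V : op C ('I_m * E)%type ('I_m * E)%type) (W : op C ('I_m * F)%type ('I_m * F)%type).

Lemma Lsum_SN i e f (G : (option 'I_m * option 'I_m) * (E * F) -> C) :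
  \sum_x locop (vacext V) (vacext W) ((Some i, None), (e, f)) x * G x =
  \sum_a \sum_e' V (i, e) (a, e') * G ((Some a, None), (e', f)).
Proof.
rewrite sum_pair sum_pair sum_option /= [X in X + _]big1 ?add0r; last first.
  by move=> xb _; rewrite big1 // => -[xe xf] _; rewrite /locop /vacext /= mul0r mul0r.
apply: eq_bigr => a _.
rewrite sum_option /= [X in _ + X]big1 ?addr0; last first.
  by move=> b _; rewrite big1 // => -[xe xf] _; rewrite /locop /vacext /= mulr0 mul0r.
rewrite sum_pair; apply: eq_bigr => xe _.
rewrite -[RHS](sum_delta' f (fun xf => V (i, e) (a, xe) * G ((Some a, None), (xe, xf)))).
by apply: eq_bigr => xf _; rewrite /locop /vacext /=; ring.
Qed.

Lemma Lsum_NS j e f (G : (option 'I_m * option 'I_m) * (E * F) -> C) :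
  \sum_x locop (vacext V) (vacext W) ((None, Some j), (e, f)) x * G x =
  \sum_b \sum_f' W (j, f) (b, f') * G ((None, Some b), (e, f')).
Proof.
rewrite sum_pair sum_pair sum_option /=.
rewrite [X in _ + X]big1 ?addr0; last first.
  by move=> xa _; rewrite big1 // => xb _; rewrite big1 // => -[xe xf] _; rewrite /locop /vacext /= mul0r mul0r.
rewrite sum_option /= [X in X + _]big1 ?add0r; last first.
  by move=> -[xe xf] _; rewrite /locop /vacext /= mulr0 mul0r.
apply: eq_bigr => b _.
rewrite sum_pair exchange_big; apply: eq_bigr => xf _.
rewrite -[RHS](sum_delta' e (fun xe => W (j, f) (b, xf) * G ((None, Some b), (xe, xf)))).
by apply: eq_bigr => xe _; rewrite /locop /vacext /=; ring.
Qed.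

End Eval.


Section Eval2.
Variable C : numClosedFieldType.
Variable m : nat.
Variables (E F : finType).
Variables (V : op C ('I_m * E)%type ('I_m * E)%type) (W : op C ('I_m * F)%type ('I_m * F)%type).

Lemma Lsum_SN_c i e f (H : (option 'I_m * option 'I_m) * (E * F) -> C) :
  \sum_x H x * (locop (vacext V) (vacext W) ((Some i, None), (e, f)) x)^* =
  \sum_a \sum_e' (V (i, e) (a, e'))^* * H ((Some a, None), (e', f)).
Proof.
rewrite -[LHS]conjCK rmorph_sum /=.
under eq_bigr => x _ do rewrite rmorphM /= conjCK mulrC.
rewrite Lsum_SN rmorph_sum /=; apply: eq_bigr => a _.
rewrite rmorph_sum /=; apply: eq_bigr => e' _.
by rewrite rmorphM /= conjCK.
Qed.

Lemma Lsum_NS_c j e f (H : (option 'I_m * option 'I_m) * (E * F) -> C) :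
  \sum_x H x * (locop (vacext V) (vacext W) ((None, Some j), (e, f)) x)^* =
  \sum_b \sum_f' (W (j, f) (b, f'))^* * H ((None, Some b), (e, f')).
Proof.
rewrite -[LHS]conjCK rmorph_sum /=.
under eq_bigr => x _ do rewrite rmorphM /= conjCK mulrC.
rewrite Lsum_NS rmorph_sum /=; apply: eq_bigr => a _.
rewrite rmorph_sum /=; apply: eq_bigr => e' _.
by rewrite rmorphM /= conjCK.
Qed.

Variable sigma : op C (E * F)%type (E * F)%type.
Variable k : 'I_m.

Definition ek : op C 'I_m 'I_m := fun a b => ((a == k) && (b == k))%:R.

Definition avec i e f : E * F -> C := fun c => V (i, e) (k, c.1) * (f == c.2)%:R.
Definition bvec j e f : E * F -> C := fun c => W (j, f) (k, c.2) * (e == c.1)%:R.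

Definition RHSop (omega : op C bool bool) :=
  mulop (mulop (adjop (@Uvac C m))
           (ptrace2
              (conjop (locop (vacext V) (vacext W))
                 (tensop (conjop (@Uvac C m) (tensop ek omega)) sigma))))
           (@Uvac C m).

Lemma mulop_eq (S T U : finType) (A : op C S T) (B : op C T U) i j :
  mulop A B i j = \sum_x A i x * B x j.
Proof. by []. Qed.

Lemma TU_ab (X : op C ('I_m * bool)%type ('I_m * bool)%type) a p b q :
  mulop (mulop (@Uvac C m) X) (adjop (@Uvac C m)) (uidx (a, p)) (uidx (b, q)) = X (a, p) (b, q).
Proof. exact: TU_eval. Qed.

Lemma sum_ek (G : 'I_m -> 'I_m -> C) : \sum_a \sum_a' ek a a' * G a a' = G k k.
Proof.
rewrite (bigD1 k) //= [X in _ + X]big1 ?addr0; last first.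
  by move=> a /negbTE Ha; apply: big1 => a' _; rewrite /ek Ha mul0r.
by under eq_bigr => a' _ do rewrite /ek eqxx andTb; rewrite sum_delta.
Qed.

Lemma qf_split x y : qf sigma x y =
  \sum_e1 \sum_f1 \sum_e2 \sum_f2 x (e1, f1) * sigma (e1, f1) (e2, f2) * (y (e2, f2))^*.
Proof.
rewrite /qf sum_pair; apply: eq_bigr => e1 _; apply: eq_bigr => f1 _.
by rewrite sum_pair.
Qed.

Lemma qf_aa i j e e' f : qf sigma (avec i e f) (avec j e' f) =
  \sum_e1 \sum_e2 V (i, e) (k, e1) * sigma (e1, f) (e2, f) * (V (j, e') (k, e2))^*.
Proof.
rewrite qf_split; apply: eq_bigr => e1 _.
rewrite -(sum_delta' f (fun f1 => \sum_e2 V (i, e) (k, e1) * sigma (e1, f1) (e2, f) * (V (j, e') (k, e2))^*)).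
apply: eq_bigr => f1 _; rewrite mulr_sumr; apply: eq_bigr => e2 _.
rewrite -(sum_delta' f (fun f2 => (f == f1)%:R * (V (i, e) (k, e1) * sigma (e1, f1) (e2, f2) * (V (j, e') (k, e2))^*))).
apply: eq_bigr => f2 _; rewrite /avec /= rmorphM /= conjC_nat.
case: eqP => [<-|_]; case: eqP => [<-|_] //=; ring.
Qed.

Lemma qf_bb i j e e' f : qf sigma (bvec i e f) (bvec j e' f) =
  \sum_f1 \sum_f2 W (i, f) (k, f1) * sigma (e, f1) (e', f2) * (W (j, f) (k, f2))^*.
Proof.
rewrite qf_split.
rewrite -(sum_delta' e (fun e1 => \sum_f1 \sum_f2 W (i, f) (k, f1) * sigma (e1, f1) (e', f2) * (W (j, f) (k, f2))^*)).
apply: eq_bigr => e1 _; rewrite mulr_sumr; apply: eq_bigr => f1 _.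
rewrite -(sum_delta' e' (fun e2 => (e == e1)%:R * \sum_f2 (W (i, f) (k, f1) * sigma (e1, f1) (e2, f2) * (W (j, f) (k, f2))^*))).
apply: eq_bigr => e2 _; rewrite !mulr_sumr; apply: eq_bigr => f2 _.
rewrite /bvec /= rmorphM /= conjC_nat.
case: eqP => [<-|_]; case: eqP => [<-|_] //=; ring.
Qed.

Lemma qf_ab i j e f : qf sigma (avec i e f) (bvec j e f) =
  \sum_e1 \sum_f2 V (i, e) (k, e1) * sigma (e1, f) (e, f2) * (W (j, f) (k, f2))^*.
Proof.
rewrite qf_split; apply: eq_bigr => e1 _.
rewrite -(sum_delta' f (fun f1 => \sum_f2 V (i, e) (k, e1) * sigma (e1, f1) (e, f2) * (W (j, f) (k, f2))^*)).
apply: eq_bigr => f1 _.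
rewrite -(sum_delta' e (fun e2 => (f == f1)%:R * \sum_f2 (V (i, e) (k, e1) * sigma (e1, f1) (e2, f2) * (W (j, f) (k, f2))^*))).
apply: eq_bigr => e2 _; rewrite !mulr_sumr; apply: eq_bigr => f2 _.
rewrite /avec /bvec /= rmorphM /= conjC_nat.
case: eqP => [<-|_]; case: eqP => [<-|_] //=; ring.
Qed.

Lemma coll4 (T1 T2 : finType) (G : 'I_m -> T1 -> 'I_m -> T2 -> C) :
  \sum_a \sum_x \sum_a' \sum_y ek a' a * G a x a' y = \sum_x \sum_y G k x k y.
Proof.
rewrite (bigD1 k) //= [X in _ + X]big1 ?addr0; last first.
  move=> a /negbTE Ha; apply: big1 => x _; apply: big1 => a' _; apply: big1 => y _.
  by rewrite /ek Ha andbF mul0r.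
apply: eq_bigr => x _.
rewrite (bigD1 k) //= [X in _ + X]big1 ?addr0; last first.
  move=> a' /negbTE Ha; apply: big1 => y _.
  by rewrite /ek Ha mul0r.
by apply: eq_bigr => y _; rewrite /ek eqxx mul1r.
Qed.

Lemma RHS00 omega i j :
  RHSop omega (i, false) (j, false) = omega false false * \sum_e \sum_f qf sigma (avec i e f) (avec j e f).
Proof.
rewrite /RHSop sandwich /ptrace2 sum_pair mulr_sumr; apply: eq_bigr => e _.
rewrite mulr_sumr; apply: eq_bigr => f _.
rewrite /uidx /= /conjop {1}/mulop /= Lsum_SN_c.
under eq_bigr => a _ do under eq_bigr => e' _ do rewrite mulop_eq Lsum_SN.
rewrite /tensop /=.
under eq_bigr => a _ do under eq_bigr => e' _ do under eq_bigr => a' _ do under eq_bigr => e'' _ do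
  rewrite (TU_ab _ a' false a false).
transitivity (\sum_a \sum_e' \sum_a' \sum_e'' ek a' a * (omega false false *
   (V (i, e) (a', e'') * sigma (e'', f) (e', f) * (V (j, e) (a, e'))^*))).
  apply: eq_bigr => a _; apply: eq_bigr => e' _; rewrite mulr_sumr; apply: eq_bigr => a' _.
  rewrite mulr_sumr; apply: eq_bigr => e'' _ /=; ring.
rewrite coll4 qf_aa mulr_sumr exchange_big; apply: eq_bigr => e1 _.
rewrite mulr_sumr; apply: eq_bigr => e2 _; ring.
Qed.

Lemma RHS11 omega i j :
  RHSop omega (i, true) (j, true) = omega true true * \sum_e \sum_f qf sigma (bvec i e f) (bvec j e f).
Proof.
rewrite /RHSop sandwich /ptrace2 sum_pair mulr_sumr; apply: eq_bigr => e _.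
rewrite mulr_sumr; apply: eq_bigr => f _.
rewrite /uidx /= /conjop {1}/mulop /= Lsum_NS_c.
under eq_bigr => a _ do under eq_bigr => e' _ do rewrite mulop_eq Lsum_NS.
rewrite /tensop /=.
under eq_bigr => a _ do under eq_bigr => e' _ do under eq_bigr => a' _ do under eq_bigr => e'' _ do
  rewrite (TU_ab _ a' true a true).
transitivity (\sum_a \sum_e' \sum_a' \sum_e'' ek a' a * (omega true true *
   (W (i, f) (a', e'') * sigma (e, e'') (e, e') * (W (j, f) (a, e'))^*))).
  apply: eq_bigr => a _; apply: eq_bigr => e' _; rewrite mulr_sumr; apply: eq_bigr => a' _.
  rewrite mulr_sumr; apply: eq_bigr => e'' _ /=; ring.
rewrite coll4 qf_bb mulr_sumr exchange_big; apply: eq_bigr => e1 _.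
rewrite mulr_sumr; apply: eq_bigr => e2 _; ring.
Qed.

Lemma RHS01 omega i j :
  RHSop omega (i, false) (j, true) = omega false true * \sum_e \sum_f qf sigma (avec i e f) (bvec j e f).
Proof.
rewrite /RHSop sandwich /ptrace2 sum_pair mulr_sumr; apply: eq_bigr => e _.
rewrite mulr_sumr; apply: eq_bigr => f _.
rewrite /uidx /= /conjop {1}/mulop /= Lsum_NS_c.
under eq_bigr => a _ do under eq_bigr => e' _ do rewrite mulop_eq Lsum_SN.
rewrite /tensop /=.
under eq_bigr => a _ do under eq_bigr => e' _ do under eq_bigr => a' _ do under eq_bigr => e'' _ do
  rewrite (TU_ab _ a' false a true).
transitivity (\sum_a \sum_e' \sum_a' \sum_e'' ek a' a * (omega false true *
   (V (i, e) (a', e'') * sigma (e'', f) (e, e') * (W (j, f) (a, e'))^*))).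
  apply: eq_bigr => a _; apply: eq_bigr => e' _; rewrite mulr_sumr; apply: eq_bigr => a' _.
  rewrite mulr_sumr; apply: eq_bigr => e'' _ /=; ring.
rewrite coll4 qf_ab mulr_sumr exchange_big; apply: eq_bigr => e1 _.
rewrite mulr_sumr; apply: eq_bigr => e2 _; ring.
Qed.

End Eval2.


Section QF.
Variable C : numClosedFieldType.
Variable T : finType.
Variable s : op C T T.

Lemma qf_suml (L : finType) (g : L -> C) (x : L -> T -> C) y :
  qf s (fun c => \sum_l g l * x l c) y = \sum_l g l * qf s (x l) y.
Proof.
rewrite /qf; symmetry; under eq_bigr => l _ do rewrite mulr_sumr.
rewrite exchange_big; apply: eq_bigr => c _.
under eq_bigr => l _ do rewrite mulr_sumr.
rewrite exchange_big; apply: eq_bigr => c' _; symmetry.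
by rewrite !mulr_suml; apply: eq_bigr => l _; ring.
Qed.

Lemma qf_sumr (L : finType) (g : L -> C) x (y : L -> T -> C) :
  qf s x (fun c => \sum_l g l * y l c) = \sum_l (g l)^* * qf s x (y l).
Proof.
rewrite /qf; symmetry; under eq_bigr => l _ do rewrite mulr_sumr.
rewrite exchange_big; apply: eq_bigr => c _.
under eq_bigr => l _ do rewrite mulr_sumr.
rewrite exchange_big; apply: eq_bigr => c' _; symmetry.
rewrite rmorph_sum /= !mulr_sumr; apply: eq_bigr => l _; rewrite rmorphM /=; ring.
Qed.

Lemma qf_subl x y z :
  qf s (fun c => x c - y c) z = qf s x z - qf s y z.
Proof.
rewrite /qf -sumrB; apply: eq_bigr => c _; rewrite -sumrB; apply: eq_bigr => c' _; ring.
Qed.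

Lemma qf_subr x y z :
  qf s z (fun c => x c - y c) = qf s z x - qf s z y.
Proof.
rewrite /qf -sumrB; apply: eq_bigr => c _; rewrite -sumrB; apply: eq_bigr => c' _.
rewrite rmorphB /=; ring.
Qed.

Lemma qf_scalel a x y : qf s (fun c => a * x c) y = a * qf s x y.
Proof.
rewrite /qf mulr_sumr; apply: eq_bigr => c _; rewrite mulr_sumr; apply: eq_bigr => c' _; ring.
Qed.

Lemma qf_scaler a x y : qf s x (fun c => a * y c) = a^* * qf s x y.
Proof.
rewrite /qf mulr_sumr; apply: eq_bigr => c _; rewrite mulr_sumr; apply: eq_bigr => c' _.
rewrite rmorphM /=; ring.
Qed.

Lemma qf_herm x y : adjop s = s -> qf s y x = (qf s x y)^*.
Proof.
move=> hs; rewrite /qf rmorph_sum /= exchange_big; apply: eq_bigr => c _.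
rewrite rmorph_sum /=; apply: eq_bigr => c' _.
rewrite !rmorphM /= conjCK -{1}hs /adjop; ring.
Qed.

Lemma qf_ge0 x : psd s -> 0 <= qf s x x.
Proof.
case=> _ /(_ (fun c => (x c)^*)) h.
suff -> : qf s x x = \sum_i \sum_j ((x i)^*)^* * s i j * (x j)^* by [].
by apply: eq_bigr => i _; apply: eq_bigr => j _; rewrite conjCK.
Qed.

Lemma CS0 x y : psd s -> qf s x x = 0 -> qf s x y = 0.
Proof.
move=> hp hx; have hs := hp.1.
set z := qf s x y; set a := qf s y y.
have ha : 0 <= a by exact: qf_ge0.
have ha1 : (a + 1)^* = a + 1 by apply: geC0_conj; rewrite addr_ge0.
have := qf_ge0 (fun c => (a + 1) * x c - z * y c) hp.
rewrite qf_subl !qf_subr !qf_scalel !qf_scaler hx (qf_herm x y hs) -/z -/a ha1.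
have -> : (a + 1) * ((a + 1) * 0) - (a + 1) * (z^* * z) -
  (z * ((a + 1) * z^*) - z * (z^* * a)) =
          - ((z * z^*) * (a + 2)) by ring.
rewrite oppr_ge0 => hle.
have hge : 0 <= (z * z^*) * (a + 2) by rewrite mulr_ge0 ?mul_conjC_ge0 ?addr_ge0.
have /eqP : (z * z^*) * (a + 2) = 0 by apply/eqP; rewrite eq_le hle hge.
rewrite mulf_eq0 => /orP[|].
  by rewrite mulf_eq0 conjC_eq0 orbb => /eqP.
move=> /eqP h2; have : 0 < a + 2 by rewrite ltr_wpDl ?ltr0n.
by rewrite h2 ltxx.
Qed.

End QF.


Section Steps.
Variable C : numClosedFieldType.
Variables (M T R : finType).
Variable s : op C T T.
Hypothesis hs : psd s.
Variable psi : M -> C.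
Hypothesis hpsi : \sum_i (psi i)^* * psi i = 1.
Variables a b : M -> R -> T -> C.
Hypothesis h00 : forall i j, \sum_r qf s (a i r) (a j r) = psi i * (psi j)^*.
Hypothesis h11 : forall i j, \sum_r qf s (b i r) (b j r) = psi i * (psi j)^*.
Hypothesis h01 : forall i j, \sum_r qf s (a i r) (b j r) = psi i * (psi j)^*.

Lemma sum0_each (F : R -> C) : (forall r, 0 <= F r) -> \sum_r F r = 0 -> forall r, F r = 0.
Proof. by move=> h1 h2 r; apply: (psumr_eq0P (P := xpredT)). Qed.

Lemma stepA i r y : qf s (a i r) y = qf s (b i r) y.
Proof.
have hsum : \sum_r qf s (fun c => a i r c - b i r c) (fun c => a i r c - b i r c) = 0.
  under eq_bigr => r' _ do rewrite qf_subl !qf_subr (qf_herm (a i r') (b i r') hs.1).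
  rewrite !sumrB -rmorph_sum /= h00 h01 h11 rmorphM /= conjCK; ring.
have := sum0_each (fun r => qf_ge0 _ hs) hsum r.
move=> /(CS0 y hs); rewrite qf_subl => /eqP; rewrite subr_eq0 => /eqP.
done.
Qed.

Definition gv r : T -> C := fun c => \sum_l (psi l)^* * a l r c.

Lemma hAg i : \sum_r qf s (a i r) (gv r) = psi i.
Proof.
rewrite /gv; under eq_bigr => r _ do rewrite qf_sumr.
rewrite exchange_big /=.
under eq_bigr => l _ do rewrite -mulr_sumr h00 conjCK.
rewrite -[RHS]mulr1 -hpsi mulr_sumr; apply: eq_bigr => l _; ring.
Qed.

Lemma hgA i : \sum_r qf s (gv r) (a i r) = (psi i)^*.
Proof.
rewrite /gv; under eq_bigr => r _ do rewrite qf_suml.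
rewrite exchange_big /=.
under eq_bigr => l _ do rewrite -mulr_sumr h00.
rewrite -[RHS]mulr1 -hpsi mulr_sumr; apply: eq_bigr => l _; ring.
Qed.

Lemma hgg : \sum_r qf s (gv r) (gv r) = 1.
Proof.
rewrite {1}/gv; under eq_bigr => r _ do rewrite qf_suml.
rewrite exchange_big /=.
under eq_bigr => l _ do rewrite -mulr_sumr hAg.
by rewrite -hpsi.
Qed.

Lemma stepB i r y : qf s (a i r) y = psi i * qf s (gv r) y.
Proof.
have hsum : \sum_r qf s (fun c => a i r c - psi i * gv r c) (fun c => a i r c - psi i * gv r c) = 0.
  under eq_bigr => r' _ do rewrite qf_subl !qf_subr !qf_scalel !qf_scaler.
  rewrite !sumrB.
rewrite -!big_distrr /= h00 hAg hgA hgg; ring.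
have := sum0_each (fun r => qf_ge0 _ hs) hsum r.
move=> /(CS0 y hs); rewrite qf_subl qf_scalel => /eqP; rewrite subr_eq0 => /eqP.
done.
Qed.

Lemma stepC i i' r r' :
  qf s (a i r) (a i' r') = psi i * (psi i')^* * \sum_l qf s (b l r) (b l r').
Proof.
have key : forall j j' t t', qf s (a j t) (a j' t') = psi j * (psi j')^* * qf s (gv t) (gv t').
  move=> j j' t t'.
  rewrite stepB (qf_herm _ _ hs.1) stepB rmorphM /= -(qf_herm _ _ hs.1); ring.
have hbb : forall j t t', qf s (a j t) (a j t') = qf s (b j t) (b j t').
  move=> j t t'; rewrite stepA (qf_herm _ _ hs.1) stepA -(qf_herm _ _ hs.1) //.
rewrite key; congr (_ * _).
under eq_bigr => l _ do rewrite -hbb key.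
rewrite -mulr_suml.
suff -> : \sum_l psi l * (psi l)^* = 1 by rewrite mul1r.
by rewrite -hpsi; apply: eq_bigr => l _; rewrite mulrC.
Qed.

End Steps.


Section OpAlg.
Variable C : numClosedFieldType.

Lemma mulopA (S T U X : finType) (A : op C S T) (B : op C T U) (D : op C U X) :
  mulop (mulop A B) D = mulop A (mulop B D).
Proof.
apply: functional_extensionality => i; apply: functional_extensionality => j.
rewrite /mulop; under eq_bigr do rewrite mulr_suml.
rewrite exchange_big; apply: eq_bigr => x _; rewrite mulr_sumr.
by apply: eq_bigr => y _; rewrite mulrA.
Qed.

Lemma mul1op (S T : finType) (A : op C S T) : mulop (@idop C S) A = A.
Proof.
apply: functional_extensionality => i; apply: functional_extensionality => j.
by rewrite /mulop /idop sum_delta'.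
Qed.

Lemma mulop1 (S T : finType) (A : op C S T) : mulop A (@idop C T) = A.
Proof.
apply: functional_extensionality => i; apply: functional_extensionality => j.
rewrite /mulop /idop.
by rewrite sum_deltar.
Qed.

Lemma unsand (S : finType) (V D : op C S S) : unitary V ->
  mulop (mulop (adjop V) (conjop V D)) V = D.
Proof.
case=> h1 h2; rewrite /conjop -!mulopA h1 mul1op mulopA h1 mulop1 //.
Qed.

Lemma unit_pt (S : finType) (V : op C S S) a b : unitary V ->
  \sum_x (V x a)^* * V x b = (a == b)%:R.
Proof. by case=> h1 _; have := congr1 (fun M => M a b) h1. Qed.

End OpAlg.


Section Concrete.
Variable C : numClosedFieldType.
Variable m : nat.
Variables (E F : finType).
Variables (V : op C ('I_m * E)%type ('I_m * E)%type) (W : op C ('I_m * F)%type ('I_m * F)%type).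
Variable sigma : op C (E * F)%type (E * F)%type.

Definition sigE e e2 := \sum_f sigma (e, f) (e2, f).
Definition Dk (k : 'I_m) : op C ('I_m * E)%type ('I_m * E)%type :=
  fun x y => ek C k x.1 y.1 * sigE x.2 y.2.

Lemma Y_conj k i e i' e2 :
  \sum_f qf sigma (avec V k i e f) (avec V k i' e2 f) = conjop V (Dk k) (i, e) (i', e2).
Proof.
under eq_bigr => f _ do rewrite qf_aa.
symmetry.
rewrite /conjop mulop_eq sum_pair.
under [LHS]eq_bigr => b _ do under eq_bigr => e3 _ do rewrite mulop_eq sum_pair.
transitivity (\sum_b \sum_e3 \sum_a \sum_e1 ek C k a b *
   (V (i, e) (a, e1) * sigE e1 e3 * (V (i', e2) (b, e3))^*)).
  apply: eq_bigr => b _; apply: eq_bigr => e3 _; rewrite /adjop mulr_suml.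
  apply: eq_bigr => a _; rewrite mulr_suml; apply: eq_bigr => e1 _.
  rewrite /Dk /=; ring.
rewrite coll4 [LHS]exchange_big.
symmetry; rewrite [LHS]exchange_big; apply: eq_bigr => e1 _.
rewrite [LHS]exchange_big; apply: eq_bigr => e3 _.
rewrite /sigE mulr_sumr mulr_suml; apply: eq_bigr => f _; ring.
Qed.

Lemma W_marg k e e2 : unitary W ->
  \sum_f \sum_l qf sigma (bvec W k l e f) (bvec W k l e2 f) = sigE e e2.
Proof.
move=> hW.
under eq_bigr => f _ do under eq_bigr => l _ do rewrite qf_bb.
rewrite exchange_big pair_bigA /= exchange_big.
apply: eq_bigr => f1 _; rewrite exchange_big.
transitivity (\sum_f2 sigma (e, f1) (e2, f2) * ((k, f2) == (k, f1))%:R).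
  apply: eq_bigr => f2 _; rewrite -(unit_pt _ _ hW) mulr_sumr.
  by apply: eq_bigr => -[x1 x2] _ /=; ring.
under eq_bigr => f2 _ do rewrite xpair_eqE eqxx andTb.
by rewrite sum_deltar.
Qed.

End Concrete.


Section States.
Variable C : numClosedFieldType.

Lemma ek_state m (k : 'I_m) : state (ek C k).
Proof.
split; last first.
  rewrite /trop /ek; transitivity (\sum_i (i == k)%:R * (1 : C)).
    by apply: eq_bigr => i _; rewrite andbb mulr1.
  by rewrite sum_delta.
split.
  apply: functional_extensionality => a; apply: functional_extensionality => b.
  by rewrite /adjop /ek conjC_nat andbC.
move=> v.
rewrite (eq_bigr (fun i => \sum_j ek C k i j * ((v i)^* * v j))); last first.
  by move=> i _; apply: eq_bigr => j _; ring.
by rewrite (sum_ek k (fun i j => (v i)^* * v j)) mulrC mul_conjC_ge0.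
Qed.

Definition w00 : op C bool bool := fun p q => (~~ p && ~~ q)%:R.
Definition w11 : op C bool bool := fun p q => (p && q)%:R.
Definition wp : op C bool bool := fun _ _ => 2^-1.

Lemma w00_state : state w00.
Proof.
split; last by rewrite /trop big_bool /= add0r.
split.
  apply: functional_extensionality => a; apply: functional_extensionality => b.
  by rewrite /adjop /w00 conjC_nat andbC.
move=> v; rewrite !big_bool /= ?mulr0 ?mul0r ?add0r ?addr0 ?mulr1 mulrC.
exact: mul_conjC_ge0.
Qed.

Lemma w11_state : state w11.
Proof.
split; last by rewrite /trop big_bool /= addr0.
split.
  apply: functional_extensionality => a; apply: functional_extensionality => b.
  by rewrite /adjop /w11 conjC_nat andbC.
move=> v; rewrite !big_bool /= ?mulr0 ?mul0r ?add0r ?addr0 ?mulr1 mulrC.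
exact: mul_conjC_ge0.
Qed.

Lemma two_neq0 : (2 : C) != 0.
Proof. by rewrite pnatr_eq0. Qed.

Lemma wp_state : state wp.
Proof.
have h2 := two_neq0.
split; [split|].
- apply: functional_extensionality => a; apply: functional_extensionality => b.
  by rewrite /adjop /wp geC0_conj // invr_ge0 ler0n.
- move=> v; rewrite !big_bool /wp /=.
  have -> : (v true)^* * 2^-1 * v true + (v true)^* * 2^-1 * v false +
    ((v false)^* * 2^-1 * v true + (v false)^* * 2^-1 * v false) =
    2^-1 * ((v true + v false) * (v true + v false)^*).
    rewrite rmorphD /=; ring.
  by rewrite mulr_ge0 ?invr_ge0 ?ler0n ?mul_conjC_ge0.
- rewrite /trop big_bool /wp.
  by change ((2:C)^-1 + 2^-1 = 1); field.
Qed.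

Lemma chanC_ek m (psi : 'I_m -> C) k (omega : op C bool bool) i p j q :
  chanC psi (tensop (ek C k) omega) (i, p) (j, q) = psi i * (psi j)^* * omega p q.
Proof.
rewrite /chanC /tensop /=; congr (_ * _).
transitivity (\sum_x (x == k)%:R * omega p q).
  by apply: eq_bigr => x _; rewrite /ek andbb.
by rewrite sum_delta.
Qed.

End States.


Lemma key (C : numClosedFieldType) m (psi : 'I_m -> C)
  (hpsi : \sum_i (psi i)^* * psi i = 1) (E F : finType)
  (sigma : op C (E * F)%type (E * F)%type)
  (V : op C ('I_m * E)%type ('I_m * E)%type) (W : op C ('I_m * F)%type ('I_m * F)%type)
  (hsig : state sigma) (hW : unitary W) (k : 'I_m)
  (hH : forall omega, state omega -> chanC psi (tensop (ek C k) omega) = RHSop V W sigma k omega) :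
  forall i e i' e2, conjop V (Dk sigma k) (i, e) (i', e2) = psi i * (psi i')^* * sigE sigma e e2.
Proof.
pose a := fun i (r : (E * F)%type) => avec V k i r.1 r.2.
pose b := fun i (r : (E * F)%type) => bvec W k i r.1 r.2.
have h00 : forall i j, \sum_r qf sigma (a i r) (a j r) = psi i * (psi j)^*.
  move=> i j; have := congr1 (fun M => M (i, false) (j, false)) (hH _ (w00_state C)).
  rewrite /= chanC_ek RHS00 /w00 /= mulr1 mul1r => ->.
  by rewrite sum_pair.
have h11 : forall i j, \sum_r qf sigma (b i r) (b j r) = psi i * (psi j)^*.
  move=> i j; have := congr1 (fun M => M (i, true) (j, true)) (hH _ (w11_state C)).
  rewrite /= chanC_ek RHS11 /w11 /= mulr1 mul1r => ->.
  by rewrite sum_pair.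
have h01 : forall i j, \sum_r qf sigma (a i r) (b j r) = psi i * (psi j)^*.
  move=> i j; have := congr1 (fun M => M (i, false) (j, true)) (hH _ (wp_state C)).
  rewrite /= chanC_ek RHS01 /wp mulrC => /(mulfI (invr_neq0 (two_neq0 C))) ->.
  by rewrite sum_pair.
move=> i e i' e2.
rewrite -Y_conj.
transitivity (\sum_f psi i * (psi i')^* * \sum_l qf sigma (b l (e, f)) (b l (e2, f))).
  by apply: eq_bigr => f _; rewrite -(stepC hsig.1 hpsi h00 h11 h01 i i' (e, f) (e2, f)).
by rewrite -mulr_sumr /= (W_marg sigma k e e2 hW).
Qed.

Theorem proposition1 (C : numClosedFieldType) (m : nat) (hm : (2 <= m)%N)
    (psi0 : 'I_m -> C) (hpsi0 : \sum_(i : 'I_m) (psi0 i)^* * psi0 i = 1) :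
  ~ exists (e f : nat) (sigma : op C ('I_e * 'I_f)%type ('I_e * 'I_f)%type)
      (V : op C ('I_m * 'I_e)%type ('I_m * 'I_e)%type)
      (W : op C ('I_m * 'I_f)%type ('I_m * 'I_f)%type),
      [/\ state sigma, unitary V, unitary W &
       forall (rho : op C 'I_m 'I_m) (omega : op C bool bool),
         state rho -> state omega ->
         chanC psi0 (tensop rho omega) =
         mulop (mulop (adjop (@Uvac C m))
           (ptrace2
              (conjop (locop (vacext V) (vacext W))
                 (tensop (conjop (@Uvac C m) (tensop rho omega)) sigma))))
           (@Uvac C m)].
Proof.
move=> [e [f [sigma [V [W [hsig hV hW hH]]]]]].
have hk : forall k : 'I_m, forall i e1 i' e2,
    conjop V (Dk sigma k) (i, e1) (i', e2) = psi0 i * (psi0 i')^* * sigE sigma e1 e2.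
  move=> k; apply: (key hpsi0 hsig hW).
  by move=> omega hom; apply: hH => //; apply: ek_state.
pose k0 : 'I_m := Ordinal (ltn_trans (isT : (0 < 1)%N) hm).
pose k1 : 'I_m := Ordinal hm.
have hc : conjop V (Dk sigma k0) = conjop V (Dk sigma k1).
  apply: functional_extensionality => -[i e1]; apply: functional_extensionality => -[i' e2].
  by rewrite !hk.
have hD := congr1 (fun X => mulop (mulop (adjop V) X) V) hc.
rewrite /= !unsand // in hD.
have h0 : forall e0, sigE sigma e0 e0 = 0.
  move=> e0; have := congr1 (fun M => M (k0, e0) (k0, e0)) hD.
  by rewrite /Dk /ek /= mul1r mul0r.
have := hsig.2; rewrite /trop sum_pair.
under eq_bigr => e0 _ do rewrite -/(sigE sigma e0 e0) h0.
by rewrite big1_eq => /esym/eqP; rewrite oner_eq0.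
Qed.
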